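(* Assume the model, algorithm and hypotheses described in the context. Set $\lambda=C_{\lambda}\sigma\sqrt{np\log n}$ for some large constant $C_{\lambda}>0$ and $\tau=C_\tau\sigma\sqrt{\log n}$ for a large enough constant $C_\tau>0$. Suppose that $n^{2}p\gg\kappa^{3}\mu rn\log^{2}n$ and $\frac{\sigma}{\sigma_{\min}}\sqrt{\frac{n}{p}}\ll\frac{1}{\sqrt{\kappa^{4}\mu r\log n}}$, and take the step size $\eta\asymp1/(n\kappa^{3}\sigma_{\max})$. Let $t_0=n^{47}$. If the iterates satisfy hypotheses (a)–(e) for all $0\le t\le t_0$ and the descent property (f) for all $1\le t\le t_0$, then with probability at least $1-O(n^{-50})$, \[ \min_{0\leq t<t_{0}}\left\Vert \nabla f\left(X^{t},Y^{t};S^{t}\right)\right\Vert _{\mathrm{F}}\leq\frac{1}{n^{20}}\frac{\lambda}{p}\sqrt{\sigma_{\min}}. \]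
   Context: Notation: for a matrix $A$, $\|A\|$ is its spectral norm, $\|A\|_{\mathrm F}$ its Frobenius norm, $\|A\|_{2,\infty}$ the largest Euclidean norm of its rows, $\|A\|_1=\sum_{i,j}|A_{ij}|$. $\mathcal{O}^{r\times r}$ is the set of $r\times r$ orthogonal matrices. For $\Omega\subseteq[n]\times[n]$, $\mathcal P_\Omega$ sets all entries outside $\Omega$ to zero. $\mathcal S_\tau$ is entrywise soft thresholding, $\mathcal S_\tau(x)=\mathrm{sign}(x)\max\{|x|-\tau,0\}$. The notation $a\ll b$ (resp. $a\gg b$) means $a\le b/c$ (resp. $a\ge cb$) for a sufficiently large universal constant $c>0$; $a\asymp b$ means equality up to universal constant factors. Model: $L^\star\in\mathbb R^{n\times n}$ has rank $r$ and SVD $L^\star=U^\star\Sigma^\star V^{\star\top}$, with largest/smallest nonzero singular values $\sigma_{\max},\sigma_{\min}$ and condition number $\kappa=\sigma_{\max}/\sigma_{\min}$; it is $\mu$-incoherent: $\|U^\star\|_{2,\infty},\|V^\star\|_{2,\infty}\le\sqrt{\mu r/n}$. Let $X^\star=U^\star(\Sigma^\star)^{1/2}$, $Y^\star=V^\star(\Sigma^\star)^{1/2}$, $F^\star=[X^{\star\top},Y^{\star\top}]^\top\in\mathbb R^{2n\times r}$. The observation set $\Omega_{\mathsf{obs}}$ contains each $(i,j)$ independently with probability $p$. The outlier matrix $S^\star$ is supported on a set $\Omega^\star$ (each observed entry corrupted with probability $\rho_{\mathsf s}$), and $\Omega^\star\subseteq\Omega_{\mathsf{aug}}\subseteq\Omega_{\mathsf{obs}}$,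 where $\Omega_{\mathsf{aug}}$ contains each $(i,j)$ independently with probability $p\rho_{\mathsf{aug}}$, $\rho_{\mathsf s}\le\rho_{\mathsf{aug}}\le 1$; the signs of the nonzero entries of $S^\star$ are i.i.d. symmetric $\pm1$, independent of everything else. The noise $E$ has i.i.d. entries, symmetric about zero, sub-Gaussian with sub-Gaussian norm at most $\sigma$. One observes $M=\mathcal P_{\Omega_{\mathsf{obs}}}(L^\star+S^\star+E)$. Loss: $f(X,Y;S)=\frac1{2p}\|\mathcal P_{\Omega_{\mathsf{obs}}}(XY^\top+S-M)\|_{\mathrm F}^2+\frac{\lambda}{2p}\|X\|_{\mathrm F}^2+\frac{\lambda}{2p}\|Y\|_{\mathrm F}^2$ for $X,Y\in\mathbb R^{n\times r}$, $S\in\mathbb R^{n\times n}$, and $F(X,Y;S)=f(X,Y;S)+\frac{\tau}{p}\|S\|_1$; $\nabla f$ denotes the gradient with respect to $(X,Y)$. Algorithm: $X^0=X^\star$, $Y^0=Y^\star$, $S^0=S^\star$, and for $t\ge0$: $X^{t+1}=X^t-\eta\nabla_X f(X^t,Y^t;S^t)$, $Y^{t+1}=Y^t-\eta\nabla_Y f(X^t,Y^t;S^t)$, $S^{t+1}=\mathcal S_\tau[\mathcal P_{\Omega_{\mathsf{obs}}}(M-X^{t+1}Y^{t+1\top})]$. Let $F^t=[X^{t\top},Y^{t\top}]^\top$ and $H^t=\arg\min_{R\in\mathcal O^{r\times r}}\|F^tR-F^\star\|_{\mathrm F}$. Hypotheses at iteration $t$ (for some universal constants $C_{\mathrm F},C_{\mathrm{op}},C_\infty,C_{\mathrm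 B},C_{\mathrm S}>0$), writing $\psi=\frac{\sigma}{\sigma_{\min}}\sqrt{\frac np}+\frac{\lambda}{p\sigma_{\min}}$ and $\psi_\infty=\frac{\sigma}{\sigma_{\min}}\sqrt{\frac {n\log n}p}+\frac{\lambda}{p\sigma_{\min}}$: (a) $\|F^tH^t-F^\star\|_{\mathrm F}\le C_{\mathrm F}\psi\|X^\star\|_{\mathrm F}$; (b) $\|F^tH^t-F^\star\|\le C_{\mathrm{op}}\psi\|X^\star\|$; (c) $\|F^tH^t-F^\star\|_{2,\infty}\le C_\infty\kappa\psi_\infty\|F^\star\|_{2,\infty}$; (d) $\|X^{t\top}X^t-Y^{t\top}Y^t\|_{\mathrm F}\le C_{\mathrm B}\kappa\eta\psi\sqrt r\sigma_{\max}^2$; (e) $\|S^t-S^\star\|\le C_{\mathrm S}\sigma\sqrt{np}$. Descent property at iteration $t\ge1$: (f) $F(X^t,Y^t;S^t)\le F(X^{t-1},Y^{t-1};S^{t-1})-\frac\eta2\|\nabla f(X^{t-1},Y^{t-1};S^{t-1})\|_{\mathrm F}^2$. Probabilities are over $\Omega_{\mathsf{obs}},\Omega_{\mathsf{aug}}$, the signs of $S^\star$ and $E$. *)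

(* Defs.v *)
From HB Require Import structures.
From mathcomp Require Import all_boot all_order all_algebra.
From mathcomp Require Import all_classical all_reals all_analysis.
Set Implicit Arguments. Unset Strict Implicit. Unset Printing Implicit Defensive.
Import Order.TTheory GRing.Theory Num.Theory.
Local Open Scope ring_scope.
Local Open Scope classical_set_scope.

Definition frob (R : realType) m n (A : 'M[R]_(m, n)) : R :=
  Num.sqrt (\sum_i \sum_j A i j ^+ 2).

Definition vnorm (R : realType) n (x : 'cV[R]_n) : R :=
  Num.sqrt (\sum_i x i 0 ^+ 2).

Definition spec (R : realType) m n (A : 'M[R]_(m, n)) : R :=
  sup [set vnorm (A *m x) | x in [set x : 'cV[R]_n | vnorm x = 1]].

Definition norm2inf (R : realType) m n (A : 'M[R]_(m, n)) : R :=
  \big[Num.max/0]_i Num.sqrt (\sum_j A i j ^+ 2).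

Definition norm1 (R : realType) m n (A : 'M[R]_(m, n)) : R :=
  \sum_i \sum_j `|A i j|.

Definition orthogonal_mx (R : realType) r (Q : 'M[R]_r) : Prop :=
  Q^T *m Q = 1%:M.

Definition projOmega (R : realType) n (O : 'I_n -> 'I_n -> bool) (A : 'M[R]_n)
  : 'M[R]_n := \matrix_(i, j) (if O i j then A i j else 0).

Definition soft (R : realType) (tau x : R) : R :=
  Num.sg x * Num.max (`|x| - tau) 0.

Definition softmx (R : realType) n (tau : R) (A : 'M[R]_n) : 'M[R]_n :=
  map_mx (soft tau) A.

Definition resid (R : realType) n r (O : 'I_n -> 'I_n -> bool) (M : 'M[R]_n)
  (X Y : 'M[R]_(n, r)) (S : 'M[R]_n) : 'M[R]_n :=
  projOmega O (X *m Y^T + S - M).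

Definition floss (R : realType) n r (p lam : R) (O : 'I_n -> 'I_n -> bool)
  (M : 'M[R]_n) (X Y : 'M[R]_(n, r)) (S : 'M[R]_n) : R :=
  (2 * p)^-1 * frob (resid O M X Y S) ^+ 2
  + lam / (2 * p) * frob X ^+ 2 + lam / (2 * p) * frob Y ^+ 2.

Definition Floss (R : realType) n r (p lam tau : R) (O : 'I_n -> 'I_n -> bool)
  (M : 'M[R]_n) (X Y : 'M[R]_(n, r)) (S : 'M[R]_n) : R :=
  floss p lam O M X Y S + tau / p * norm1 S.

Definition gradX (R : realType) n r (p lam : R) (O : 'I_n -> 'I_n -> bool)
  (M : 'M[R]_n) (X Y : 'M[R]_(n, r)) (S : 'M[R]_n) : 'M[R]_(n, r) :=
  p^-1 *: (resid O M X Y S *m Y) + (lam / p) *: X.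

Definition gradY (R : realType) n r (p lam : R) (O : 'I_n -> 'I_n -> bool)
  (M : 'M[R]_n) (X Y : 'M[R]_(n, r)) (S : 'M[R]_n) : 'M[R]_(n, r) :=
  p^-1 *: ((resid O M X Y S)^T *m X) + (lam / p) *: Y.

Definition gradnorm (R : realType) n r (p lam : R) (O : 'I_n -> 'I_n -> bool)
  (M : 'M[R]_n) (X Y : 'M[R]_(n, r)) (S : 'M[R]_n) : R :=
  Num.sqrt (frob (gradX p lam O M X Y S) ^+ 2 + frob (gradY p lam O M X Y S) ^+ 2).

Fixpoint gd_iter (R : realType) n r (p lam tau eta : R) (O : 'I_n -> 'I_n -> bool)
  (M : 'M[R]_n) (X0 Y0 : 'M[R]_(n, r)) (S0 : 'M[R]_n) (t : nat)
  : 'M[R]_(n, r) * 'M[R]_(n, r) * 'M[R]_n :=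
  match t with
  | 0 => (X0, Y0, S0)
  | t'.+1 =>
    let: (X, Y, St) := gd_iter p lam tau eta O M X0 Y0 S0 t' in
    let X' := X - eta *: gradX p lam O M X Y St in
    let Y' := Y - eta *: gradY p lam O M X Y St in
    (X', Y', softmx tau (projOmega O (M - X' *m Y'^T)))
  end.

Definition smax (R : realType) r (s : 'rV[R]_r) : R := \big[Num.max/0]_i s 0 i.
Definition smin (R : realType) r (s : 'rV[R]_r) : R :=
  \big[Num.min/smax s]_i s 0 i.
Definition kappa (R : realType) r (s : 'rV[R]_r) : R := smax s / smin s.

Definition Lstar (R : realType) n r (U V : 'M[R]_(n, r)) (s : 'rV[R]_r) : 'M[R]_n :=
  U *m diag_mx s *m V^T.
(* X* = U Sigma^{1/2}, Y* = V Sigma^{1/2} *)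
Definition halfmx (R : realType) n r (U : 'M[R]_(n, r)) (s : 'rV[R]_r)
  : 'M[R]_(n, r) := U *m diag_mx (map_mx Num.sqrt s).

Definition mutual_indep (R : realType) (d : measure_display) (T : measurableType d)
  (P : probability T R) (K : finType) (G : K -> set (set T)) : Prop :=
  forall (J : {set K}) (A : K -> set T), (forall k, k \in J -> G k (A k)) ->
    P (\bigcap_(k in [set k | k \in J]) A k) = (\prod_(k in J) P (A k))%E.

Definition ij_type n := ('I_n * 'I_n)%type.

(* event collections: sigma(Omega-block (i,j)), sigma(sign_ij), sigma(E_ij) *)
Definition model_events (R : realType) (d : measure_display) (T : measurableType d) n
  (obs aug star : T -> 'I_n -> 'I_n -> bool) (sg : T -> 'I_n -> 'I_n -> R)
  (E : T -> 'M[R]_n) (k : (ij_type n + ij_type n) + ij_type n) : set (set T) :=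
  match k with
  | inl (inl (i, j)) => [set A | exists B : set (bool * bool * bool),
                           A = [set w | B (obs w i j, aug w i j, star w i j)]]
  | inl (inr (i, j)) => [set A | exists B : set R, measurable B /\
                           A = (fun w => sg w i j) @^-1` B]
  | inr (i, j) => [set A | exists B : set R, measurable B /\
                           A = (fun w => E w i j) @^-1` B]
  end.

Definition rpca_model (R : realType) (d : measure_display) (T : measurableType d)
  (P : probability T R) n (obs aug star : T -> 'I_n -> 'I_n -> bool)
  (sg : T -> 'I_n -> 'I_n -> R) (E : T -> 'M[R]_n) (p rhos rhoaug sigma : R) : Prop :=
  [/\
      forall i j, [/\ measurable [set w | obs w i j], measurable [set w | aug w i j],
                      measurable [set w | star w i j],
                      measurable_fun setT (fun w => sg w i j) &
                      measurable_fun setT (fun w => E w i j)],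
      mutual_indep P (model_events obs aug star sg E),
      forall i j, [/\ forall w, star w i j -> aug w i j,
                      forall w, aug w i j -> obs w i j,
                      P [set w | obs w i j] = p%:E,
                      P [set w | aug w i j] = (p * rhoaug)%:E &
                      P [set w | star w i j] = (p * rhos)%:E],
      forall i j, (forall w, sg w i j = 1 \/ sg w i j = -1) /\
                  P [set w | sg w i j = 1] = (2^-1)%:E &
      (* i.i.d., symmetric, sub-Gaussian noise with psi_2 norm <= sigma *)
      forall i j, [/\ forall k l (B : set R), measurable B ->
                        P ((fun w => E w i j) @^-1` B) = P ((fun w => E w k l) @^-1` B),
                      forall (B : set R), measurable B ->
                        P ((fun w => E w i j) @^-1` B) = P ((fun w => - E w i j) @^-1` B) &
                      forall t : R, sigma < t ->
                        (\int[P]_w (expR (E w i j ^+ 2 / t ^+ 2))%:E <= 2%:E)%E]].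

Definition Sstar (R : realType) (d : measure_display) (T : measurableType d) n
  (star : T -> 'I_n -> 'I_n -> bool) (sg : T -> 'I_n -> 'I_n -> R) (Smag : 'M[R]_n)
  (w : T) : 'M[R]_n :=
  \matrix_(i, j) (if star w i j then sg w i j * Smag i j else 0).

Definition hyps_ae (R : realType) n r (CF Cop Cinf CB CS : R)
  (sigma p lam eta : R) (s : 'rV[R]_r) (Xs Ys : 'M[R]_(n, r)) (Ss : 'M[R]_n)
  (X Y : 'M[R]_(n, r)) (S : 'M[R]_n) : Prop :=
  let psi := sigma / smin s * Num.sqrt (n%:R / p) + lam / (p * smin s) in
  let psiinf := sigma / smin s * Num.sqrt (n%:R * ln n%:R / p) + lam / (p * smin s) in
  let Fs := col_mx Xs Ys in
  let F := col_mx X Y in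
  [/\ exists H : 'M[R]_r,
        [/\ orthogonal_mx H,
            (forall Q : 'M[R]_r, orthogonal_mx Q -> frob (F *m H - Fs) <= frob (F *m Q - Fs)),
            frob (F *m H - Fs) <= CF * psi * frob Xs,
            spec (F *m H - Fs) <= Cop * psi * spec Xs &
            norm2inf (F *m H - Fs) <= Cinf * kappa s * psiinf * norm2inf Fs],
      frob (X^T *m X - Y^T *m Y) <= CB * kappa s * eta * psi * Num.sqrt r%:R * smax s ^+ 2 &
      spec (S - Ss) <= CS * sigma * Num.sqrt (n%:R * p)].

(* Main.v *)
Require Import Defs.
From HB Require Import structures.
From mathcomp Require Import all_boot all_order all_algebra.
From mathcomp Require Import all_classical all_reals all_analysis.
From mathcomp Require Import ring lra.
From mathcomp Require Import measurable_realfun.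
Import Order.TTheory GRing.Theory Num.Theory.
Local Open Scope ring_scope.
Local Open Scope classical_set_scope.


Section Mx.
Variable R : realType.

Lemma sum_ge_term (I : finType) (F : I -> R) i :
  (forall k, 0 <= F k) -> F i <= \sum_k F k.
Proof. by move=> h; rewrite (bigD1 i) //= lerDl sumr_ge0. Qed.

Lemma frob_ge0 m n (A : 'M[R]_(m, n)) : 0 <= frob A.
Proof. exact: sqrtr_ge0. Qed.

Lemma frob2 m n (A : 'M[R]_(m, n)) : frob A ^+ 2 = \sum_i \sum_j A i j ^+ 2.
Proof.
rewrite /frob sqr_sqrtr //; apply: sumr_ge0 => i _; apply: sumr_ge0 => j _.
exact: sqr_ge0.
Qed.

Lemma frob_col m1 m2 n (X : 'M[R]_(m1, n)) (Y : 'M[R]_(m2, n)) :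
  frob (col_mx X Y) ^+ 2 = frob X ^+ 2 + frob Y ^+ 2.
Proof.
rewrite !frob2 big_split_ord /=; congr (_ + _); apply: eq_bigr => i _;
  apply: eq_bigr => j _; by rewrite ?col_mxEu ?col_mxEd.
Qed.

Lemma frob2_tr m n (A : 'M[R]_(m, n)) : frob A ^+ 2 = \tr (A *m A^T).
Proof.
rewrite frob2 /mxtrace; apply: eq_bigr => i _; rewrite mxE; apply: eq_bigr => j _.
by rewrite mxE expr2.
Qed.

Lemma orth_r r (H : 'M[R]_r) : orthogonal_mx H -> H *m H^T = 1%:M.
Proof. by move=> h; apply: mulmx1C. Qed.

Lemma frob_orth m r (F : 'M[R]_(m, r)) (H : 'M[R]_r) :
  orthogonal_mx H -> frob (F *m H) ^+ 2 = frob F ^+ 2.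
Proof.
move=> h; rewrite !frob2_tr trmx_mul mulmxA -(mulmxA F) orth_r // mulmx1 //.
Qed.

Lemma frob_le0 m n (A : 'M[R]_(m, n)) : frob A <= 0 -> A = 0.
Proof.
move=> h; have h0 : frob A = 0 by apply/eqP; rewrite eq_le h frob_ge0.
have : frob A ^+ 2 = 0 by rewrite h0 expr0n.
rewrite frob2 => hs; apply/matrixP => i j; rewrite mxE.
have hi : \sum_j A i j ^+ 2 = 0.
  apply: (psumr_eq0P _ hs) => // k _; apply: sumr_ge0 => l _; exact: sqr_ge0.
have : A i j ^+ 2 = 0.
  apply: (psumr_eq0P _ hi) => // k _; exact: sqr_ge0.
by move/eqP; rewrite sqrf_eq0 => /eqP.
Qed.

Lemma frobU n r (U : 'M[R]_(n, r)) : U^T *m U = 1%:M -> frob U ^+ 2 = r%:R.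
Proof. by move=> h; rewrite frob2_tr mxtrace_mulC h mxtrace1. Qed.

End Mx.


Section Spec.
Variable R : realType.

Lemma vnorm_ge_entry {n} (y : 'cV[R]_n) i : `|y i 0| <= vnorm y.
Proof.
rewrite /vnorm -sqrtr_sqr ler_sqrt; last by apply: sumr_ge0 => k _; exact: sqr_ge0.
by apply: sum_ge_term => k; exact: sqr_ge0.
Qed.

Lemma vnorm_delta n (j : 'I_n) : vnorm (delta_mx j 0 : 'cV[R]_n) = 1.
Proof.
rewrite /vnorm (bigD1 j) //= big1 ?addr0; first by rewrite mxE !eqxx /= expr1n sqrtr1.
by move=> k hk; rewrite mxE (negbTE hk) /= expr0n.
Qed.

Lemma spec_entry {n m} (A : 'M[R]_(m, n)) i j : `|A i j| <= spec A.
Proof.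
set S := [set vnorm (A *m x) | x in [set x : 'cV[R]_n | vnorm x = 1]].
have hS : has_sup S.
  split; first by exists (vnorm (A *m delta_mx j 0)); exists (delta_mx j 0) => //; exact: vnorm_delta.
  exists (Num.sqrt (\sum_i (\sum_k `|A i k|) ^+ 2)) => z [x /= hx <-].
  rewrite /vnorm ler_sqrt; last by apply: sumr_ge0 => k _; exact: sqr_ge0.
  apply: ler_sum => i0 _.
  have hxk : forall k, `|x k 0| <= 1.
    move=> k; rewrite -hx; exact: vnorm_ge_entry.
  rewrite -real_normK ?num_real //; apply: lerXn2r.
    by rewrite nnegrE; exact: normr_ge0.
    by rewrite nnegrE; apply: sumr_ge0 => k _; exact: normr_ge0.
  rewrite mxE; apply: le_trans (ler_norm_sum _ _ _) _; apply: ler_sum => k _.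
  rewrite normrM; rewrite -[X in _ <= X]mulr1; apply: ler_wpM2l => //; exact: normr_ge0.
have hmem : S (vnorm (A *m delta_mx j 0)).
  by exists (delta_mx j 0) => //; exact: vnorm_delta.
have := sup_upper_bound hS hmem; rewrite -colE => h.
rewrite /spec -/S; apply: (le_trans _ h); have := vnorm_ge_entry (col j A) i; by rewrite mxE.
Qed.

Lemma spec_le0 {n m} (A : 'M[R]_(m, n)) : spec A <= 0 -> A = 0.
Proof.
move=> h; apply/matrixP => i j; rewrite mxE; apply/eqP; rewrite -normr_le0.
exact: le_trans (spec_entry A i j) h.
Qed.

Lemma norm1_diff n (S Ss : 'M[R]_n) :
  norm1 Ss - norm1 S <= (n * n)%:R * spec (S - Ss).
Proof.
rewrite /norm1 -sumrB.
have -> : (n * n)%:R * spec (S - Ss) = \sum_(i < n) \sum_(j < n) spec (S - Ss).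
  by rewrite !sumr_const !card_ord mulr_natl -mulrnA.
apply: ler_sum => i _; rewrite -sumrB; apply: ler_sum => j _.
apply: le_trans (spec_entry (S - Ss) i j); rewrite !mxE distrC; exact: lerB_dist.
Qed.

End Spec.


Section Svd.
Variable R : realType.

Lemma s_le_smax {r} (s : 'rV[R]_r) i : s 0 i <= smax s.
Proof. exact: le_bigmax. Qed.

Lemma smin_le_s {r} (s : 'rV[R]_r) i : smin s <= s 0 i.
Proof. exact: bigmin_le. Qed.

Lemma smax_gt0 {r} (s : 'rV[R]_r) : (0 < r)%N -> (forall i, 0 < s 0 i) -> 0 < smax s.
Proof. move=> hr hs; exact: lt_le_trans (hs (Ordinal hr)) (s_le_smax s _). Qed.

Lemma smin_gt0 {r} (s : 'rV[R]_r) : (0 < r)%N -> (forall i, 0 < s 0 i) -> 0 < smin s.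
Proof.
move=> hr hs; rewrite /smin; apply: (big_ind (fun x => 0 < x)) => //.
  exact: smax_gt0.
by move=> x y hx hy; rewrite lt_min hx hy.
Qed.

Lemma smin_le_smax {r} (s : 'rV[R]_r) : (0 < r)%N -> smin s <= smax s.
Proof. move=> hr; exact: le_trans (smin_le_s s (Ordinal hr)) (s_le_smax s _). Qed.

Lemma kappa_ge1 {r} (s : 'rV[R]_r) : (0 < r)%N -> (forall i, 0 < s 0 i) -> 1 <= kappa s.
Proof.
move=> hr hs; rewrite /kappa ler_pdivlMr ?mul1r ?smin_gt0 //; exact: smin_le_smax.
Qed.

Lemma smax_kappa {r} (s : 'rV[R]_r) : (0 < r)%N -> (forall i, 0 < s 0 i) ->
  smax s = kappa s * smin s.
Proof.
move=> hr hs; rewrite /kappa divfK //; by rewrite gt_eqF // smin_gt0.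
Qed.

Lemma halfmx_prod {n r} (U V : 'M[R]_(n, r)) (s : 'rV[R]_r) :
  (forall i, 0 < s 0 i) -> halfmx U s *m (halfmx V s)^T = Lstar U V s.
Proof.
move=> hs; rewrite /halfmx /Lstar trmx_mul tr_diag_mx mulmxA -(mulmxA U) mulmx_diag.
congr (_ *m _ *m _); congr diag_mx; apply/matrixP => i j.
rewrite !mxE (ord1 i) -expr2 sqr_sqrtr //; exact: ltW.
Qed.

Lemma frob_halfmx {n r} (U : 'M[R]_(n, r)) (s : 'rV[R]_r) :
  U^T *m U = 1%:M -> (forall i, 0 < s 0 i) -> frob (halfmx U s) ^+ 2 <= r%:R * smax s.
Proof.
move=> hU hs; rewrite -(@frobU _ _ _ U hU) mulrC frob2 frob2 mulr_sumr; apply: ler_sum => i _.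
rewrite mulr_sumr; apply: ler_sum => j _.
rewrite /halfmx mul_mx_diag !mxE exprMn sqr_sqrtr; last exact: ltW.
rewrite [X in _ <= X]mulrC; apply: ler_wpM2l; [exact: sqr_ge0 | exact: s_le_smax].
Qed.

Lemma n_gt0 {n r} (U : 'M[R]_(n, r)) : (0 < r)%N -> U^T *m U = 1%:M -> (0 < n)%N.
Proof.
case: n U => // U hr hU; have := congr1 (fun A : 'M[R]_r => A (Ordinal hr) (Ordinal hr)) hU.
rewrite !mxE big_ord0 eqxx /= => /eqP; by rewrite eq_sym oner_eq0.
Qed.

Lemma mu_ge1 {n r} (U : 'M[R]_(n, r)) (mu : R) : (0 < r)%N -> U^T *m U = 1%:M ->
  norm2inf U <= Num.sqrt (mu * r%:R / n%:R) -> 1 <= mu.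
Proof.
move=> hr hU hN; have hn := n_gt0 U hr hU.
have hn' : (0 : R) < n%:R by rewrite ltr0n.
have hr' : (0 : R) < r%:R by rewrite ltr0n.
set N := norm2inf U in hN.
have hN0 : 0 <= N.
  apply: le_trans (sqrtr_ge0 (\sum_j U (Ordinal hn) j ^+ 2)) _; exact: le_bigmax.
have hrow : forall i, \sum_j U i j ^+ 2 <= N ^+ 2.
  move=> i; rewrite -[X in X <= _]sqr_sqrtr; last by apply: sumr_ge0 => j _; exact: sqr_ge0.
  apply: lerXn2r; rewrite ?nnegrE ?sqrtr_ge0 //.
  exact: (le_bigmax _ (fun i => Num.sqrt (\sum_j U i j ^+ 2)) i).
have hrN : r%:R <= n%:R * N ^+ 2.
  rewrite -(@frobU _ _ _ U hU) frob2; apply: le_trans (ler_sum _ (fun i _ => hrow i)) _.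
  by rewrite sumr_const card_ord mulr_natl.
case: (lerP (mu * r%:R / n%:R) 0) => hz.
  move: hN; rewrite ler0_sqrtr // => hN.
  have : N = 0 by apply/eqP; rewrite eq_le hN hN0.
  move=> hN'; move: hrN; rewrite hN' expr0n /= mulr0; by rewrite leNgt hr'.
have hN2 : N ^+ 2 <= mu * r%:R / n%:R.
  rewrite -(sqr_sqrtr (ltW hz)); apply: lerXn2r; rewrite ?nnegrE ?sqrtr_ge0 //.
have : r%:R <= mu * r%:R.
  apply: le_trans hrN _; rewrite -ler_pdivlMl // mulrC; exact: hN2.
by rewrite -[X in X <= _ -> _]mul1r ler_pM2r.
Qed.

End Svd.


Section Tel.
Variable R : realType.

Lemma telesc (Fv G : nat -> R) (c b : R) (t0 : nat) : 0 < c -> 0 <= b -> (0 < t0)%N ->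
  (forall t, (1 <= t <= t0)%N -> Fv t <= Fv t.-1 - c * G t.-1 ^+ 2) ->
  (forall t, (t < t0)%N -> b < G t) -> c * t0%:R * b ^+ 2 < Fv 0%N - Fv t0.
Proof.
move=> hc hb ht0 hd hG.
have hsq : forall k, (k < t0)%N -> c * b ^+ 2 < c * G k ^+ 2.
  move=> k hk; rewrite ltr_pM2l //; have := hG k hk; nra.
have key : forall k, (k <= t0)%N -> Fv k + c * k%:R * b ^+ 2 <= Fv 0%N.
  elim => [_|k IH hk]; first by rewrite mulr0 mul0r addr0.
  have h1 := hd k.+1 hk; have h2 := ltW (hsq k hk); have h3 := IH (ltnW hk).
  rewrite /= in h1; rewrite -natr1 mulrDr mulr1 mulrDl.
  lra.
case: t0 ht0 hd hG hsq key => // k _ hd hG hsq key.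
have h1 := hd k.+1 (leqnn _); have h2 := hsq k (leqnn _); have h3 := key k (leqnSn _).
rewrite /= in h1; rewrite -natr1 mulrDr mulr1 mulrDl.
lra.
Qed.

End Tel.


Section Prob.
Variable R : realType.

Lemma meas_tail d (T : measurableType d) (f : T -> R) (a : R) :
  measurable_fun setT f -> measurable [set w | a <= `|f w|].
Proof.
move=> mf; have mg : measurable_fun setT (fun w => `|f w|) by apply: measurableT_comp.
have := mg measurableT _ (measurable_itv `[a, +oo[%R); rewrite setTI.
suff -> : (fun w => `|f w|) @^-1` [set` `[a, +oo[%R] = [set w | a <= `|f w|] by [].
by apply/seteqP; split => w /=; rewrite in_itv /= andbT.
Qed.

Lemma tail_bound d (T : measurableType d) (P : probability T R) (f : T -> R) (sig a : R) :
  measurable_fun setT f -> 0 < sig -> 0 <= a ->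
  (\int[P]_w (expR (f w ^+ 2 / (2 * sig) ^+ 2))%:E <= 2%:E)%E ->
  (P [set w | (a <= `|f w|)%R] <= (2 / expR (a ^+ 2 / (2 * sig) ^+ 2))%:E)%E.
Proof.
move=> mf hs ha hint; set A := [set w | a <= `|f w|]; have mA : measurable A by apply: meas_tail.
set c := expR (a ^+ 2 / (2 * sig) ^+ 2); have hc : 0 < c := expR_gt0 _.
have mg : measurable_fun setT (EFin \o (fun w => expR (f w ^+ 2 / (2 * sig) ^+ 2))).
  apply/measurable_EFinP; apply: measurableT_comp => //.
  by apply: measurable_funM; [exact: measurable_funX | exact: measurable_cst].
have h : (c%:E * P A <= 2%:E)%E.
  rewrite -integral_cst //; apply: le_trans hint.
  apply: le_trans (ge0_subset_integral _ _ _ mg _ (subsetT A)); last first.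
  - by move=> x _; rewrite lee_fin expR_ge0.
  - exact: measurableT.
  - exact: mA.
  apply: ge0_le_integral => //.
  - by move=> x _; rewrite lee_fin ltW.
  - exact: measurable_funS mg.
  move=> x hx; rewrite lee_fin /c ler_expR; apply: ler_wpM2r.
    by rewrite invr_ge0 sqr_ge0.
  rewrite -[f x ^+ 2]real_normK ?num_real //; apply: lerXn2r => //.
have hPA : P A = (fine (P A))%:E.
  by rewrite fineK // ge0_fin_numE // (le_lt_trans (probability_le1 P mA)) // ltey.
rewrite hPA lee_fin; move: h; rewrite hPA -EFinM lee_fin => h.
by rewrite ler_pdivlMr // mulrC.
Qed.

End Prob.


Section Prob2.
Variable R : realType.

Lemma le_refl_eq (x y : R) : x = y -> x <= y.
Proof. by move->. Qed.

Lemma union_bound d (T : measurableType d) (P : probability T R) m (F : 'I_m -> set T) (c : R) :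
  (forall i, measurable (F i)) -> (forall i, (P (F i) <= c%:E)%E) ->
  (P (\big[setU/set0]_(i < m) F i) <= (c *+ m)%:E)%E.
Proof.
elim: m F => [|m IH] F mF hF; first by rewrite big_ord0 measure0 mulr0n.
rewrite big_ord_recr /=.
apply: le_trans (measureU2 _ _ _) _.
- by apply: bigsetU_measurable => i _.
- exact: mF.
rewrite mulrSr EFinD; apply: leeD; last exact: hF.
exact: IH.
Qed.

Lemma expR_pow (y : R) k : 0 <= y -> y ^+ k <= expR (k%:R * y).
Proof.
move=> hy; rewrite expRM_natl; apply: lerXn2r; rewrite ?nnegrE ?expR_ge0 //.
apply: le_trans (expR_ge1Dx y); lra.
Qed.

Lemma prob_main d (T : measurableType d) (P : probability T R) n (E : T -> 'M[R]_n) (sig : R) :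
  (0 < n)%N -> 0 < sig ->
  (forall i j, measurable_fun setT (fun w => E w i j)) ->
  (forall i j, (\int[P]_w (expR (E w i j ^+ 2 / (2 * sig) ^+ 2))%:E <= 2%:E)%E) ->
  measurable (\big[setU/set0]_(i < n) \big[setU/set0]_(j < n) [set w | sig * n%:R <= `|E w i j|]) /\
  (P (\big[setU/set0]_(i < n) \big[setU/set0]_(j < n) [set w | (sig * n%:R <= `|E w i j|)%R])
    <= ((2 * 104 ^+ 26) / n%:R ^+ 50)%:E)%E.
Proof.
move=> hn hs mE hint.
have hn' : (0 : R) < n%:R by rewrite ltr0n.
split.
  apply: bigsetU_measurable => i _; apply: bigsetU_measurable => j _; exact: meas_tail.
pose c : R := (2 * 104 ^+ 26) / n%:R ^+ 52.
have hc : forall i j, (P [set w | (sig * n%:R <= `|E w i j|)%R] <= c%:E)%E.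
  move=> i j; apply: le_trans (@tail_bound R _ _ P _ _ _ (mE i j) hs _ (hint i j)) _.
    by apply: mulr_ge0; [exact: ltW | exact: ltW].
  rewrite lee_fin /c.
  have -> : (sig * n%:R) ^+ 2 / (2 * sig) ^+ 2 = 26%:R * (n%:R ^+ 2 / 104).
    field; by rewrite gt_eqF.
  have hy : 0 < n%:R ^+ 2 / 104 :> R by apply: divr_gt0 => //; exact: exprn_gt0.
  have := expR_pow _ 26 (ltW hy); set e := expR _ => he.
  have hpos : 0 < (n%:R ^+ 2 / 104) ^+ 26 :> R by apply: exprn_gt0.
  apply: le_trans (_ : 2 / (n%:R ^+ 2 / 104) ^+ 26 <= _).
    rewrite ler_pM2l // lef_pV2 // ?posrE //; exact: lt_le_trans he.
  rewrite expr_div_n -exprM; apply: le_refl_eq.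
  field; by rewrite gt_eqF // exprn_gt0.
apply: le_trans (@union_bound _ _ P n _ (c *+ n) _ _) _.
- by move=> i; apply: bigsetU_measurable => j _; exact: meas_tail.
- move=> i; apply: union_bound => // j; exact: meas_tail.
rewrite lee_fin /c -mulrnA -(mulr_natr _ (n * n)) natrM; apply: le_refl_eq.
field; by rewrite gt_eqF.
Qed.

End Prob2.


Section Arith.
Variable R : realType.

Lemma sqrt_le_self (L : R) : 1 <= L -> Num.sqrt L <= L.
Proof.
move=> hL; have h0 : 0 <= L by lra.
rewrite -{2}(sqr_sqrtr h0) expr2 ler_peMr ?sqrtr_ge0 //.
by rewrite -sqrtr1 ler_sqrt.
Qed.

Lemma arith_T2 (x p sig sm K r L Clam CF FS2 D2 : R) :
  0 < p -> p <= 1 -> 0 < sig -> 0 < sm -> 1 <= K -> 1 <= r -> r * K <= x -> 1 <= x ->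
  1 <= L -> 0 < Clam -> 0 < CF ->
  let lam := Clam * sig * Num.sqrt (x * p * L) in
  let psi := sig / sm * Num.sqrt (x / p) + lam / (p * sm) in
  FS2 <= 2 * (r * (K * sm)) -> D2 <= (CF * psi) ^+ 2 * (r * (K * sm)) ->
  lam / (2 * p) * (CF * psi * FS2 + D2 / (CF * psi))
    <= 3 / 2 * CF * (Clam + Clam ^+ 2) * (sig ^+ 2 / p) * x ^+ 2 * L.
Proof.
move=> hp hp1 hs hsm hK hr hrK hx hL hC hCF lam psi hFS hD.
have hx0 : 0 <= x by lra.
have hL0 : 0 <= L by lra.
set s1 := Num.sqrt (x * p * L); set s2 := Num.sqrt (x / p).
have hs1 : 0 <= s1 := sqrtr_ge0 _.
have hs2 : 0 <= s2 := sqrtr_ge0 _.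
have hs1sq : s1 ^+ 2 = x * p * L.
  rewrite sqr_sqrtr //; apply: mulr_ge0 => //; apply: mulr_ge0 => //; exact: ltW.
have hs12 : s1 * s2 <= x * L.
  rewrite /s1 /s2 -sqrtrM; last by apply: mulr_ge0 => //; apply: mulr_ge0 => //; exact: ltW.
  have -> : x * p * L * (x / p) = x ^+ 2 * L by field; rewrite gt_eqF.
  rewrite sqrtrM ?sqr_ge0 // sqrtr_sqr ger0_norm //.
  apply: ler_wpM2l => //; exact: sqrt_le_self.
have hlam0 : 0 <= lam.
  by rewrite /lam; apply: mulr_ge0 => //; apply: mulr_ge0; lra.
have hpsi : 0 < psi.
  rewrite /psi; apply: ltr_wpDr.
    by apply: divr_ge0 => //; apply: mulr_ge0; lra.
  apply: mulr_gt0; first exact: divr_gt0.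
  rewrite sqrtr_gt0; apply: divr_gt0 => //; lra.
have hpsism : psi * sm = sig * s2 + lam / p.
  rewrite /psi -/s2; field; apply/andP; split; rewrite gt_eqF //.
have hth : 0 < CF * psi := mulr_gt0 hCF hpsi.
have hA : CF * psi * FS2 + D2 / (CF * psi) <= 3 * CF * psi * (r * (K * sm)).
  have h1 : CF * psi * FS2 <= CF * psi * (2 * (r * (K * sm))).
    by apply: ler_wpM2l => //; exact: ltW.
  have h2 : D2 / (CF * psi) <= CF * psi * (r * (K * sm)).
    rewrite ler_pdivrMr //; apply: le_trans hD _; apply: le_refl_eq; ring.
  lra.
apply: le_trans (_ : lam / (2 * p) * (3 * CF * psi * (r * (K * sm))) <= _).
  apply: ler_wpM2l => //; apply: divr_ge0 => //; lra.
have -> : lam / (2 * p) * (3 * CF * psi * (r * (K * sm)))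
   = 3 / 2 * CF * (r * K) / p * (lam * (psi * sm)) by field; rewrite gt_eqF.
rewrite hpsism.
have hl1 : lam * (sig * s2 + lam / p) <= (Clam + Clam ^+ 2) * sig ^+ 2 * x * L.
  have -> : lam * (sig * s2 + lam / p) = Clam * sig ^+ 2 * (s1 * s2) + Clam ^+ 2 * sig ^+ 2 * s1 ^+ 2 / p.
    by rewrite /lam -/s1; field; rewrite gt_eqF.
  rewrite hs1sq.
  have -> : Clam ^+ 2 * sig ^+ 2 * (x * p * L) / p = Clam ^+ 2 * sig ^+ 2 * x * L by field; rewrite gt_eqF.
  have : Clam * sig ^+ 2 * (s1 * s2) <= Clam * sig ^+ 2 * (x * L).
    apply: ler_wpM2l => //; apply: mulr_ge0; [lra | exact: sqr_ge0].
  lra.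
have hc0 : 0 <= 3 / 2 * CF * (r * K) / p.
  apply: divr_ge0; [|lra]; apply: mulr_ge0; [|nra]; apply: mulr_ge0; lra.
apply: le_trans (ler_wpM2l hc0 hl1) _.
have -> : 3 / 2 * CF * (r * K) / p * ((Clam + Clam ^+ 2) * sig ^+ 2 * x * L)
  = 3 / 2 * CF * (Clam + Clam ^+ 2) * (sig ^+ 2 / p) * x * L * (r * K) by field; rewrite gt_eqF.
set Q := 3 / 2 * CF * (Clam + Clam ^+ 2) * (sig ^+ 2 / p).
have hQ : 0 <= Q.
  apply: mulr_ge0; [|apply: divr_ge0; [exact: sqr_ge0|lra]].
  apply: mulr_ge0; [lra|]; apply: addr_ge0; [lra| exact: sqr_ge0].
have hQxL : 0 <= Q * x * L by apply: mulr_ge0 => //; apply: mulr_ge0.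
apply: le_trans (ler_wpM2l hQxL hrK) _; apply: le_refl_eq; ring.
Qed.

Lemma arith_T3 (x p sig L Ctau CS : R) :
  0 < p -> p <= 1 -> 0 < sig -> 1 <= x -> 1 <= L -> 0 <= Ctau -> 0 < CS ->
  Ctau * sig * Num.sqrt L / p * ((x * x) * (CS * sig * Num.sqrt (x * p)))
    <= Ctau * CS * (sig ^+ 2 / p) * x ^+ 3 * L.
Proof.
move=> hp hp1 hs hx hL hCt hCS.
have h1 : Num.sqrt L <= L := sqrt_le_self _ hL.
have h2 : Num.sqrt (x * p) <= x.
  apply: (@le_trans _ _ (Num.sqrt (x ^+ 2))).
    rewrite ler_sqrt; last exact: sqr_ge0.
    rewrite expr2; apply: ler_wpM2l; lra.
  rewrite sqrtr_sqr ger0_norm //; lra.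
have e1 : 0 <= Num.sqrt L := sqrtr_ge0 _.
have e2 : 0 <= Num.sqrt (x * p) := sqrtr_ge0 _.
have -> : Ctau * sig * Num.sqrt L / p * ((x * x) * (CS * sig * Num.sqrt (x * p)))
  = (Ctau * CS * (sig ^+ 2 / p) * x ^+ 2) * (Num.sqrt L * Num.sqrt (x * p)) by field; rewrite gt_eqF.
have -> : Ctau * CS * (sig ^+ 2 / p) * x ^+ 3 * L = (Ctau * CS * (sig ^+ 2 / p) * x ^+ 2) * (L * x).
  by rewrite exprSr; ring.
apply: ler_wpM2l.
  apply: mulr_ge0; [|apply: sqr_ge0]; apply: mulr_ge0; [nra|]; apply: divr_ge0; [exact: sqr_ge0|lra].
apply: ler_pM => //.
Qed.

Lemma arith_LB (x p sig sm K L Clam ceta eta : R) :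
  0 < p -> 0 < sig -> 0 < sm -> 1 <= K -> K ^+ 4 <= x ^+ 2 -> 1 <= x -> 0 <= L ->
  0 < Clam -> 0 < ceta -> ceta / (x * K ^+ 3 * (K * sm)) <= eta ->
  ceta * Clam ^+ 2 * (sig ^+ 2 / p) * x ^+ 5 * L / 2 <=
  eta / 2 * x ^+ 47 * ((x ^+ 20)^-1 * (Clam * sig * Num.sqrt (x * p * L) / p) * Num.sqrt sm) ^+ 2.
Proof.
move=> hp hs hsm hK hK4 hx hL hC hc he.
have hx0 : 0 < x by lra.
have hK0 : 0 < K by lra.
have hsq1 : Num.sqrt (x * p * L) ^+ 2 = x * p * L.
  rewrite sqr_sqrtr //; apply: mulr_ge0 => //; apply: mulr_ge0; lra.
have hsq2 : Num.sqrt sm ^+ 2 = sm by rewrite sqr_sqrtr //; exact: ltW.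
set W := x ^+ 8 * Clam ^+ 2 * sig ^+ 2 * L * sm / (2 * p).
have hW : 0 <= W.
  rewrite /W; apply: divr_ge0; [|lra]; apply: mulr_ge0; [|lra].
  apply: mulr_ge0 => //; apply: mulr_ge0; [|exact: sqr_ge0]; apply: mulr_ge0; [|exact: sqr_ge0].
  by apply: exprn_ge0; lra.
have -> : eta / 2 * x ^+ 47 * ((x ^+ 20)^-1 * (Clam * sig * Num.sqrt (x * p * L) / p) * Num.sqrt sm) ^+ 2
   = eta * W.
  rewrite !exprMn hsq2 hsq1 /W -exprVn.
  field; rewrite ?gt_eqF ?exprn_gt0 //.
apply: le_trans (ler_wpM2r hW he).
have -> : ceta / (x * K ^+ 3 * (K * sm)) * W
  = (ceta * Clam ^+ 2 * (sig ^+ 2 / p) * x ^+ 5 * L / 2) * (x ^+ 2 / K ^+ 4).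
  rewrite /W; field; rewrite ?gt_eqF ?exprn_gt0 //.
rewrite -[X in X <= _]mulr1; apply: ler_wpM2l.
  apply: divr_ge0; [|lra]; apply: mulr_ge0 => //; apply: mulr_ge0; [|by apply: exprn_ge0; lra].
  apply: mulr_ge0; [nra|]; apply: divr_ge0; [exact: sqr_ge0|lra].
by rewrite ler_pdivlMr ?mul1r // exprn_gt0.
Qed.

Lemma arith_final (q x L A B G : R) :
  0 < q -> 1 <= x -> 1 <= L -> 0 <= A -> 0 <= B -> 0 < G ->
  (1 + 2 * A + 2 * B) / G <= x ->
  q * x ^+ 4 / 2 + A * q * x ^+ 2 * L + B * q * x ^+ 3 * L <= G * q * x ^+ 5 * L / 2.
Proof.
move=> hq hx hL hA hB hG hN.
have hN' : 1 + 2 * A + 2 * B <= G * x.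
  by move: hN; rewrite ler_pdivrMr // [x * G]mulrC.
have x2 : 1 <= x ^+ 2 by nra.
have x3 : x ^+ 2 <= x ^+ 3 by rewrite exprSr; nra.
have x4 : x ^+ 3 <= x ^+ 4 by rewrite (exprSr x 3); nra.
have hqL : 0 <= q * L by nra.
have hx4 : 0 <= x ^+ 4 by apply: exprn_ge0; lra.
have hqx4 : 0 <= q * x ^+ 4 by apply: mulr_ge0 => //; lra.
have e1 : q * x ^+ 4 <= q * x ^+ 4 * L.
  by rewrite -[X in X <= _]mulr1; apply: ler_wpM2l.
have e2 : A * (q * L) * x ^+ 2 <= A * (q * L) * x ^+ 4.
  apply: ler_wpM2l; [exact: mulr_ge0|lra].
have e3 : B * (q * L) * x ^+ 3 <= B * (q * L) * x ^+ 4.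
  apply: ler_wpM2l; [exact: mulr_ge0|lra].
have e4 : (q * x ^+ 4 * L) * (1 + 2 * A + 2 * B) <= (q * x ^+ 4 * L) * (G * x).
  by apply: ler_wpM2l => //; apply: mulr_ge0 => //; lra.
have -> : G * q * x ^+ 5 * L / 2 = (q * x ^+ 4 * L) * (G * x) / 2 by rewrite exprSr; field.
have -> : A * q * x ^+ 2 * L = A * (q * L) * x ^+ 2 by ring.
have -> : B * q * x ^+ 3 * L = B * (q * L) * x ^+ 3 by ring.
have : A * (q * L) * x ^+ 4 = A * (q * x ^+ 4 * L) by ring.
have : B * (q * L) * x ^+ 4 = B * (q * x ^+ 4 * L) by ring.
nra.
Qed.

End Arith.

Section Arith2.
Variable R : realType.
Lemma arith_K (x p K mu r L : R) : 0 < p -> p <= 1 -> 1 <= K -> 1 <= mu -> 1 <= r ->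
  1 <= L -> 1 <= x -> x ^+ 2 * p >= 1 * K ^+ 3 * mu * r * x * L ^+ 2 ->
  r * K <= x /\ K ^+ 4 <= x ^+ 2.
Proof.
move=> hp hp1 hK hmu hr hL hx h.
have hK3 : 1 <= K ^+ 3.
  by rewrite -(expr1n R 3); apply: lerXn2r; rewrite ?nnegrE //; lra.
have hL2 : 1 <= L ^+ 2 by rewrite -(expr1n R 2); apply: lerXn2r; rewrite ?nnegrE //; lra.
have hA : 0 <= K ^+ 3 * r * x by apply: mulr_ge0; [apply: mulr_ge0|]; lra.
have h1 : K ^+ 3 * r * x <= K ^+ 3 * mu * r * x * L ^+ 2.
  have -> : K ^+ 3 * mu * r * x * L ^+ 2 = (K ^+ 3 * r * x) * (mu * L ^+ 2) by ring.
  rewrite -[X in X <= _]mulr1; apply: ler_wpM2l => //; nra.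
have h2 : x ^+ 2 * p <= x ^+ 2.
  rewrite -[X in _ <= X]mulr1; apply: ler_wpM2l => //; exact: sqr_ge0.
have h3 : K ^+ 3 * r <= x.
  have : K ^+ 3 * r * x <= x * x by rewrite mul1r in h; rewrite -expr2; lra.
  move=> hh; rewrite -(ler_pM2r (_ : 0 < x)) //; lra.
have hK1 : K <= K ^+ 3.
  rewrite (exprS K 2) -[X in X <= _]mulr1; apply: ler_wpM2l; [lra|].
  by rewrite -(expr1n R 2); apply: lerXn2r; rewrite ?nnegrE //; lra.
split.
  apply: le_trans h3; rewrite mulrC; apply: ler_wpM2r; lra.
have h4 : K ^+ 3 <= x by apply: le_trans h3; rewrite -[X in X <= _]mulr1; apply: ler_wpM2l; lra.
have -> : K ^+ 4 = K * K ^+ 3 by rewrite exprS.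
rewrite expr2; apply: ler_pM; lra.
Qed.
End Arith2.


Section Loss.
Variable R : realType.

Lemma frob_diff {m k} (A B : 'M[R]_(m, k)) (th : R) : 0 < th ->
  frob A ^+ 2 - frob B ^+ 2 <= th * frob A ^+ 2 + frob (B - A) ^+ 2 / th.
Proof.
move=> hth; rewrite !frob2 -sumrB mulr_sumr mulr_suml -big_split /=.
apply: ler_sum => i _; rewrite -sumrB mulr_sumr mulr_suml -big_split /=.
apply: ler_sum => j _; rewrite !mxE.
set a := A i j; set b := B i j.
have -> : b = a + (b - a) by ring.
set dd := b - a.
have h : th * a ^+ 2 + (a + dd - a) ^+ 2 / th - (a ^+ 2 - (a + dd) ^+ 2)
   = th * (a + dd / th) ^+ 2 + dd ^+ 2 by field; rewrite gt_eqF.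
have : 0 <= th * (a + dd / th) ^+ 2 + dd ^+ 2.
  apply: addr_ge0; [apply: mulr_ge0; [exact: ltW | exact: sqr_ge0] | exact: sqr_ge0].
rewrite -h subr_ge0.
have -> : a + dd - a = dd by ring.
by [].
Qed.

Lemma F0_upper {n r} (p lam tau : R) (O : 'I_n -> 'I_n -> bool) (Ls Ss E : 'M[R]_n)
  (Xs Ys : 'M[R]_(n, r)) (a : R) :
  0 < p -> Xs *m Ys^T = Ls -> (forall i j, `|E i j| <= a) ->
  Floss p lam tau O (projOmega O (Ls + Ss + E)) Xs Ys Ss <=
  (2 * p)^-1 * ((n * n)%:R * a ^+ 2) + lam / (2 * p) * frob Xs ^+ 2
    + lam / (2 * p) * frob Ys ^+ 2 + tau / p * norm1 Ss.
Proof.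
move=> hp hXY hE; rewrite /Floss /floss; rewrite lerD2r -!addrA lerD2r.
apply: ler_wpM2l; first by rewrite invr_ge0; apply: mulr_ge0; lra.
rewrite frob2.
have -> : (n * n)%:R * a ^+ 2 = \sum_(i < n) \sum_(j < n) a ^+ 2.
  by rewrite !sumr_const !card_ord mulr_natl -mulrnA.
apply: ler_sum => i _; apply: ler_sum => j _.
rewrite /resid hXY !mxE.
case: (O i j) => /=.
  have -> : Ls i j + Ss i j - (Ls i j + (Ss i j + E i j)) = - E i j by ring.
  rewrite sqrrN -real_normK ?num_real //; apply: lerXn2r; rewrite ?nnegrE ?normr_ge0 //.
    exact: le_trans (normr_ge0 _) (hE i j).
rewrite expr0n /=; exact: sqr_ge0.
Qed.

Lemma Ft_lower {n r} (p lam tau : R) (O : 'I_n -> 'I_n -> bool) (M : 'M[R]_n)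
  (X Y : 'M[R]_(n, r)) (S : 'M[R]_n) :
  0 < p ->
  lam / (2 * p) * frob X ^+ 2 + lam / (2 * p) * frob Y ^+ 2 + tau / p * norm1 S
   <= Floss p lam tau O M X Y S.
Proof.
move=> hp; rewrite /Floss /floss lerD2r -!addrA lerDr.
apply: mulr_ge0; [rewrite invr_ge0; apply: mulr_ge0; lra | exact: sqr_ge0].
Qed.

End Loss.


Lemma det_pos (R : realType) n r (U V : 'M[R]_(n, r)) (s : 'rV[R]_r) (p sig Clam Ctau CF CS : R)
  (O : 'I_n -> 'I_n -> bool) (Ss E : 'M[R]_n) (X Y : 'M[R]_(n, r)) (S : 'M[R]_n) (H : 'M[R]_r) :
  U^T *m U = 1%:M -> V^T *m V = 1%:M -> (forall i, 0 < s 0 i) -> (0 < r)%N ->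
  0 < p -> p <= 1 -> 0 < sig -> 0 < Clam -> 0 <= Ctau -> 0 < CF -> 0 < CS ->
  1 <= n%:R :> R -> 1 <= ln (n%:R : R) -> r%:R * kappa s <= n%:R ->
  (forall i j, `|E i j| <= sig * n%:R) ->
  let lam := Clam * sig * Num.sqrt (n%:R * p * ln n%:R) in
  let tau := Ctau * sig * Num.sqrt (ln n%:R) in
  let Xs := halfmx U s in let Ys := halfmx V s in
  let psi := sig / smin s * Num.sqrt (n%:R / p) + lam / (p * smin s) in
  orthogonal_mx H ->
  frob (col_mx X Y *m H - col_mx Xs Ys) <= CF * psi * frob Xs ->
  spec (S - Ss) <= CS * sig * Num.sqrt (n%:R * p) ->
  Floss p lam tau O (projOmega O (Lstar U V s + Ss + E)) Xs Ys Ss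
   - Floss p lam tau O (projOmega O (Lstar U V s + Ss + E)) X Y S
  <= (sig ^+ 2 / p) * n%:R ^+ 4 / 2
     + (3 / 2 * CF * (Clam + Clam ^+ 2)) * (sig ^+ 2 / p) * n%:R ^+ 2 * ln n%:R
     + (Ctau * CS) * (sig ^+ 2 / p) * n%:R ^+ 3 * ln n%:R.
Proof.
move=> hU hV hs hr hp hp1 hsig hC hCt hCF hCS hx hL hrK hE lam tau Xs Ys psi hH hFr hSp.
set x : R := n%:R. set L : R := ln x.
set sm := smin s. set K := kappa s.
have hsm : 0 < sm := smin_gt0 _ s hr hs.
have hK1 : 1 <= K := kappa_ge1 _ s hr hs.
have hsM : smax s = K * sm := smax_kappa _ s hr hs.
have hr1 : 1 <= r%:R :> R by rewrite ler1n.
have hXY : Xs *m Ys^T = Lstar U V s by apply: halfmx_prod.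
have hF0 := @F0_upper R n r p lam tau O (Lstar U V s) Ss E Xs Ys (sig * x) hp hXY hE.
have hFt := @Ft_lower R n r p lam tau O (projOmega O (Lstar U V s + Ss + E)) X Y S hp.
have hlam : 0 <= lam.
  rewrite /lam; apply: mulr_ge0; [apply: mulr_ge0; lra | exact: sqrtr_ge0].
have htau : 0 <= tau.
  rewrite /tau; apply: mulr_ge0; [apply: mulr_ge0; lra | exact: sqrtr_ge0].
have hl2p : 0 <= lam / (2 * p) by apply: divr_ge0; lra.
have htp : 0 <= tau / p by apply: divr_ge0; lra.
have hFS : frob Xs ^+ 2 + frob Ys ^+ 2 = frob (col_mx Xs Ys) ^+ 2 by rewrite frob_col.
have hFX : frob X ^+ 2 + frob Y ^+ 2 = frob (col_mx X Y *m H) ^+ 2 by rewrite frob_orth // frob_col.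
have hpsi : 0 < psi.
  rewrite /psi; apply: ltr_wpDr.
    by apply: divr_ge0 => //; apply: mulr_ge0; [lra | exact: ltW hsm].
  apply: mulr_gt0; first exact: divr_gt0.
  rewrite sqrtr_gt0; apply: divr_gt0 => //; lra.
have hth : 0 < CF * psi := mulr_gt0 hCF hpsi.
have hdiff := @frob_diff R _ _ (col_mx Xs Ys) (col_mx X Y *m H) _ hth.
have hXs2 : frob Xs ^+ 2 <= r%:R * (K * sm) by rewrite -hsM; exact: frob_halfmx.
have hYs2 : frob Ys ^+ 2 <= r%:R * (K * sm) by rewrite -hsM; exact: frob_halfmx.
have hFS2 : frob (col_mx Xs Ys) ^+ 2 <= 2 * (r%:R * (K * sm)) by rewrite -hFS; lra.
have hD2 : frob (col_mx X Y *m H - col_mx Xs Ys) ^+ 2 <= (CF * psi) ^+ 2 * (r%:R * (K * sm)).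
  apply: le_trans (_ : (CF * psi * frob Xs) ^+ 2 <= _).
    by apply: lerXn2r; rewrite ?nnegrE ?frob_ge0 //; apply: mulr_ge0; [lra|exact: frob_ge0].
  rewrite exprMn; apply: ler_wpM2l => //; exact: sqr_ge0.
have hT2 : lam / (2 * p) * (CF * psi * frob (col_mx Xs Ys) ^+ 2 + frob (col_mx X Y *m H - col_mx Xs Ys) ^+ 2 / (CF * psi))
    <= 3 / 2 * CF * (Clam + Clam ^+ 2) * (sig ^+ 2 / p) * x ^+ 2 * L :=
  @arith_T2 R _ _ _ _ _ _ _ _ _ _ _ hp hp1 hsig hsm hK1 hr1 hrK hx hL hC hCF hFS2 hD2.
have hn1 := @norm1_diff R n S Ss.
have hT3pre : tau / p * (norm1 Ss - norm1 S) <= tau / p * ((x * x) * (CS * sig * Num.sqrt (x * p))).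
  apply: ler_wpM2l => //; apply: le_trans hn1 _; rewrite natrM; apply: ler_wpM2l => //.
have hT3 : tau / p * ((x * x) * (CS * sig * Num.sqrt (x * p))) <= Ctau * CS * (sig ^+ 2 / p) * x ^+ 3 * L :=
  @arith_T3 R _ _ _ _ _ _ hp hp1 hsig hx hL hCt hCS.
have hlin2 : tau / p * (norm1 Ss - norm1 S) = tau / p * norm1 Ss - tau / p * norm1 S by ring.
have hT1 : (2 * p)^-1 * ((n * n)%:R * (sig * x) ^+ 2) = (sig ^+ 2 / p) * x ^+ 4 / 2.
  by rewrite natrM -/x; field; rewrite gt_eqF.
have hmul : lam / (2 * p) * (frob (col_mx Xs Ys) ^+ 2 - frob (col_mx X Y *m H) ^+ 2)
  <= lam / (2 * p) * (CF * psi * frob (col_mx Xs Ys) ^+ 2 + frob (col_mx X Y *m H - col_mx Xs Ys) ^+ 2 / (CF * psi)).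
  by apply: ler_wpM2l.
have hlin : lam / (2 * p) * (frob (col_mx Xs Ys) ^+ 2 - frob (col_mx X Y *m H) ^+ 2)
  = lam / (2 * p) * frob Xs ^+ 2 + lam / (2 * p) * frob Ys ^+ 2 - (lam / (2 * p) * frob X ^+ 2 + lam / (2 * p) * frob Y ^+ 2).
  by rewrite -hFS -hFX; ring.
move: hT2 hT3 hT3pre hF0 hFt hmul hlin hlin2; rewrite -/x -/L -/Xs -/Ys hT1.
lra.
Qed.


Theorem mainTheorem1 (R : realType) (CF Cop Cinf CB CS ceta_lo ceta_hi : R) :
  0 < CF -> 0 < Cop -> 0 < Cinf -> 0 < CB -> 0 < CS ->
  0 < ceta_lo -> ceta_lo <= ceta_hi ->
  exists Clam0 Ctau0 : R, forall Clam Ctau : R, Clam0 <= Clam -> Ctau0 <= Ctau ->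
  exists c1 c2 C0 : R, [/\ 0 < c1, 0 < c2, 0 < C0 &
  forall (n r : nat) (d : measure_display) (T : measurableType d) (P : probability T R)
    (U V : 'M[R]_(n, r)) (s : 'rV[R]_r) (mu p rhos rhoaug sigma eta : R)
    (obs aug star : T -> 'I_n -> 'I_n -> bool) (sg : T -> 'I_n -> 'I_n -> R)
    (E : T -> 'M[R]_n) (Smag : 'M[R]_n),
    (0 < r)%N ->
    (* SVD of L* and incoherence *)
    U^T *m U = 1%:M -> V^T *m V = 1%:M -> (forall i, 0 < s 0 i) ->
    norm2inf U <= Num.sqrt (mu * r%:R / n%:R) ->
    norm2inf V <= Num.sqrt (mu * r%:R / n%:R) ->
    (* random model *)
    0 < p <= 1 -> 0 <= rhos -> rhos <= rhoaug -> rhoaug <= 1 -> 0 <= sigma ->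
    rpca_model P obs aug star sg E p rhos rhoaug sigma ->
    (* sample size, noise level, step size *)
    n%:R ^+ 2 * p >= c1 * kappa s ^+ 3 * mu * r%:R * n%:R * ln n%:R ^+ 2 ->
    sigma / smin s * Num.sqrt (n%:R / p)
      <= (c2 * Num.sqrt (kappa s ^+ 4 * mu * r%:R * ln n%:R))^-1 ->
    ceta_lo / (n%:R * kappa s ^+ 3 * smax s) <= eta ->
    eta <= ceta_hi / (n%:R * kappa s ^+ 3 * smax s) ->
    let lam := Clam * sigma * Num.sqrt (n%:R * p * ln n%:R) in
    let tau := Ctau * sigma * Num.sqrt (ln n%:R) in
    let t0 := (n ^ 47)%N in
    let Xs := halfmx U s in
    let Ys := halfmx V s in
    let Ls := Lstar U V s in
    let Ss := Sstar star sg Smag in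
    let M := fun w => projOmega (obs w) (Ls + Ss w + E w) in
    let it := fun w t => gd_iter p lam tau eta (obs w) (M w) Xs Ys (Ss w) t in
    let bad := [set w |
        (forall t, (t <= t0)%N ->
           hyps_ae CF Cop Cinf CB CS sigma p lam eta s Xs Ys (Ss w)
             (it w t).1.1 (it w t).1.2 (it w t).2) /\
        (forall t, (1 <= t <= t0)%N ->
           Floss p lam tau (obs w) (M w) (it w t).1.1 (it w t).1.2 (it w t).2
           <= Floss p lam tau (obs w) (M w)
                (it w t.-1).1.1 (it w t.-1).1.2 (it w t.-1).2
              - eta / 2 * gradnorm p lam (obs w) (M w)
                (it w t.-1).1.1 (it w t.-1).1.2 (it w t.-1).2 ^+ 2) /\
        ~ (exists t, (t < t0)%N /\
             gradnorm p lam (obs w) (M w) (it w t).1.1 (it w t).1.2 (it w t).2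
             <= (n%:R ^+ 20)^-1 * (lam / p) * Num.sqrt (smin s))] in
    exists A : set T, [/\ measurable A, bad `<=` A &
                         (P A <= (C0 * (n%:R ^+ 50)^-1)%:E)%E]].
Proof.
move=> hCF hCop hCinf hCB hCS hcl hclh.
exists 1, 0 => Clam Ctau hClam hCtau.
have hClam0 : 0 < Clam by lra.
pose A0 : R := 3 / 2 * CF * (Clam + Clam ^+ 2).
pose B0 : R := Ctau * CS.
pose G0 : R := ceta_lo * Clam ^+ 2.
have hA0 : 0 <= A0.
  rewrite /A0; apply: mulr_ge0; [lra|]; apply: addr_ge0; [lra|exact: sqr_ge0].
have hB0 : 0 <= B0 by rewrite /B0; apply: mulr_ge0; lra.
have hG0 : 0 < G0 by rewrite /G0; apply: mulr_gt0 => //; exact: exprn_gt0.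
pose N0 : R := expR 1 + (1 + 2 * A0 + 2 * B0) / G0 + 1.
have hN1 : 0 <= (1 + 2 * A0 + 2 * B0) / G0 by apply: divr_ge0; lra.
have he1 : 0 < expR 1 :> R := expR_gt0 _.
have hN0 : 1 <= N0 by rewrite /N0; lra.
pose C0 : R := 2 * 104 ^+ 26 + N0 ^+ 50.
have hC2 : 0 < 2 * 104 ^+ 26 :> R by apply: mulr_gt0 => //; exact: exprn_gt0.
have hN50 : 0 <= N0 ^+ 50 by apply: exprn_ge0; lra.
exists 1, 1, C0; split => //; first by rewrite /C0; lra.
move=> n r d T P U V s mu p rhos rhoaug sigma eta obs aug star sg E Smag
  hr hU hV hs hmuU hmuV /andP[hp0 hp1] hrhos hrr hra hsig hmodel hc1 hc2 heta1 heta2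
  lam tau t0 Xs Ys Ls Ss M it bad.
have hn := n_gt0 _ U hr hU.
pose x : R := n%:R.
have hx0 : 0 < x by rewrite /x ltr0n.
have hx50 : 0 < x ^+ 50 by exact: exprn_gt0.
case: (ltrP x N0) => hxN.
  exists setT; split => //; rewrite probability_setT lee_fin.
  rewrite ler_pdivlMr // mul1r /C0.
  have : x ^+ 50 <= N0 ^+ 50 by apply: lerXn2r; rewrite ?nnegrE; lra.
  lra.
have hx1 : 1 <= x by lra.
have hxe : expR 1 <= x by rewrite /N0 in hxN; lra.
pose L : R := ln x.
have hL1 : 1 <= L.
  rewrite /L -[X in X <= _](expRK 1) ler_ln ?posrE //.
pose sm := smin s.
pose K := kappa s.
have hsm : 0 < sm := smin_gt0 _ s hr hs.
have hK1 : 1 <= K := kappa_ge1 _ s hr hs.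
have hsM : smax s = K * sm := smax_kappa _ s hr hs.
have hmu : 1 <= mu := mu_ge1 _ U mu hr hU hmuU.
have hr1 : 1 <= r%:R :> R by rewrite ler1n.
have [hrK hK4] : r%:R * K <= x /\ K ^+ 4 <= x ^+ 2.
  exact: (@arith_K R x p K mu r%:R L hp0 hp1 hK1 hmu hr1 hL1 hx1 hc1).
have heta0 : 0 < eta.
  have hK0 : 0 < K by lra.
  have hK3 : 0 < K ^+ 3 by exact: exprn_gt0.
  apply: lt_le_trans heta1; apply: divr_gt0 => //; rewrite hsM.
  by apply: mulr_gt0; apply: mulr_gt0.
have ht0 : (0 < t0)%N by rewrite /t0 expn_gt0 hn.
have ht0R : t0%:R = x ^+ 47 :> R by rewrite /t0 natrX.
have hXY : Xs *m Ys^T = Ls by apply: halfmx_prod.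
have hlam0 : 0 <= lam.
  rewrite /lam; apply: mulr_ge0; [apply: mulr_ge0; lra | exact: sqrtr_ge0].
pose b : R := (x ^+ 20)^-1 * (lam / p) * Num.sqrt sm.
have hb0 : 0 <= b.
  rewrite /b; apply: mulr_ge0; [apply: mulr_ge0|exact: sqrtr_ge0].
    by rewrite invr_ge0; apply: exprn_ge0; lra.
  by apply: divr_ge0; lra.
pose Fv w t := Floss p lam tau (obs w) (M w) (it w t).1.1 (it w t).1.2 (it w t).2.
have tel : forall w, bad w -> eta / 2 * x ^+ 47 * b ^+ 2 < Fv w 0%N - Fv w t0.
  move=> w [_ [hd hng]]; rewrite -ht0R.
  apply: (@telesc R (Fv w) (fun t => gradnorm p lam (obs w) (M w) (it w t).1.1 (it w t).1.2 (it w t).2) (eta / 2) b t0) => //.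
  - by apply: divr_gt0.
  - move=> t ht; rewrite ltNge; apply/negP => hle; apply: hng; exists t; split => //.
case: (eqVneq sigma 0) => [hs0|hsn0].
  exists set0; split => //; last by rewrite measure0 lee_fin; apply: mulr_ge0; [rewrite /C0; lra | rewrite invr_ge0; lra].
  move=> w hw; have := tel w hw.
  case: hw => [hh [_ _]].
  have hlamz : lam = 0 by rewrite /lam hs0 mulr0 mul0r.
  have htauz : tau = 0 by rewrite /tau hs0 mulr0 mul0r.
  have hbz : b = 0 by rewrite /b hlamz mul0r mulr0 mul0r.
  rewrite hbz expr0n /= mulr0 subr_gt0.
  case: (hh t0 (leqnn _)) => [[H [hHo _ hFr _ _]] _ hSp].
  move: hFr hSp; rewrite hlamz hs0 !(mul0r, mulr0, add0r).
  move=> /frob_le0 hFH /spec_le0 hSS.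
  move: hFH; rewrite mul_col_mx => /eqP; rewrite subr_eq0 => /eqP /eq_col_mx [hX hY].
  have hX' : (it w t0).1.1 = Xs *m H^T by rewrite -hX -mulmxA orth_r // mulmx1.
  have hY' : (it w t0).1.2 = Ys *m H^T by rewrite -hY -mulmxA orth_r // mulmx1.
  have hS' : (it w t0).2 = Ss w by apply/eqP; rewrite -subr_eq0 hSS.
  have hprod : (it w t0).1.1 *m (it w t0).1.2^T = Xs *m Ys^T.
    by rewrite hX' hY' trmx_mul trmxK mulmxA -(mulmxA Xs) hHo mulmx1.
  rewrite /Fv /Floss /floss /resid hprod hS' hlamz htauz !mul0r /=.
  by rewrite lt_irreflexive.
have hspos : 0 < sigma by rewrite lt_def hsn0 hsig.
case: hmodel => hmeas _ _ _ hnoise.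
have mE : forall i j, measurable_fun setT (fun w => E w i j) by move=> i j; case: (hmeas i j).
have hint : forall i j, (\int[P]_w (expR (E w i j ^+ 2 / (2 * sigma) ^+ 2))%:E <= 2%:E)%E.
  move=> i j; case: (hnoise i j) => _ _ h; apply: h; lra.
have [mA hPA] := @prob_main R d T P n E sigma hn hspos mE hint.
eexists; split; [exact: mA | | ]; last first.
  apply: le_trans hPA _; rewrite lee_fin /C0; apply: ler_wpM2r; [rewrite invr_ge0; lra | lra].
move=> w hw; apply: contrapT => hnA.
have hE : forall i j, `|E w i j| <= sigma * x.
  move=> i j; case: (ltrP `|E w i j| (sigma * x)) => [/ltW //|hge]; exfalso; apply: hnA.
  rewrite (bigD1 i) //=; left; rewrite (bigD1 j) //=; left; exact: hge.
have htel := tel w hw.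
case: hw => [hh _]; case: (hh t0 (leqnn _)) => [[H [hHo _ hFr _ _]] _ hSp].
have hCtau' : 0 <= Ctau by lra.
have hdet : Fv w 0%N - Fv w t0 <= sigma ^+ 2 / p * x ^+ 4 / 2 + A0 * (sigma ^+ 2 / p) * x ^+ 2 * L
      + B0 * (sigma ^+ 2 / p) * x ^+ 3 * L :=
  @det_pos R n r U V s p sigma Clam Ctau CF CS (obs w) (Ss w) (E w) (it w t0).1.1 (it w t0).1.2
    (it w t0).2 H hU hV hs hr hp0 hp1 hspos hClam0 hCtau' hCF hCS hx1 hL1 hrK hE hHo hFr hSp.
have hq : 0 < sigma ^+ 2 / p by apply: divr_gt0 => //; exact: exprn_gt0.
have hNx : (1 + 2 * A0 + 2 * B0) / G0 <= x by rewrite /N0 in hxN; lra.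
have hfin := @arith_final R (sigma ^+ 2 / p) x L A0 B0 G0 hq hx1 hL1 hA0 hB0 hG0 hNx.
have heta1' : ceta_lo / (x * K ^+ 3 * (K * sm)) <= eta by rewrite -hsM.
have hL0 : 0 <= L by lra.
have hLB : G0 * (sigma ^+ 2 / p) * x ^+ 5 * L / 2 <= eta / 2 * x ^+ 47 * b ^+ 2 :=
  @arith_LB R x p sigma sm K L Clam ceta_lo eta hp0 hspos hsm hK1 hK4 hx1 hL0 hClam0 hcl heta1'.
lra.
Qed.
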